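(* Assume the standing assumptions on $A,\Omega,R,K$ in the context and that there exists $\theta_0\in]-A,A[$ with $\min_{\theta\in]-A,A[}\lambda(\theta,0)=\lambda(\theta_0,0)<0$. For $\varepsilon\in]0,\varepsilon_0[$ let $n_\varepsilon$ be a positive bounded solution of (E) and $\rho_\varepsilon(x)=\int_{-A}^An_\varepsilon(x,\theta)d\theta$. Then $0\le\rho_\varepsilon\le C_R$ for all $\varepsilon<\varepsilon_0$. Moreover, for $p\in[1,+\infty]$ there exists $C>0$ such that $\|\rho_\varepsilon\|_{W^{2,p}(\Omega)}\le C$ for all $\varepsilon$ small enough.
   Context: Standing assumptions: $A>0$; $\Omega=\bigcup_{i=1}^m ]a_i,b_i[\subset\mathbb{R}$ with $a_1<b_1<\dots<a_m<b_m$; $R\in C^1(\overline\Omega\times[-A,A])$ with $\|R\|_{W^{1,\infty}(\Omega\times]-A,A[)}<C_R$ for a constant $C_R$; $K$ is a $C^1$ even function with $K>0$, $0<c_K<K<C_K$, $|K'|<C_K$. $L\phi(x)=\int_\Omega[\phi(x)-\phi(y)]K(x-y)dy$. $\lambda(\theta,\rho)$ is the principal eigenvalue of $\psi\mapsto-\psi''+L\psi-(R(\cdot,\theta)-\rho)\psi$ on $\Omega$ with Neumann boundary conditions. $\mu_\varepsilon$ is the principal eigenvalue of $\xi\mapsto-\partial_{xx}\xi-\varepsilon^2\partial_{\theta\theta}\xi+L\xi-R\xi$ on $\Omega\times]-A,A[$ with Neumann boundary conditions; $\varepsilon_0>0$ is such that $\mu_\varepsilon<\lambda(\theta_0,0)/2$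 for $\varepsilon\in]0,\varepsilon_0[$. Problem (E): $-\varepsilon^2\partial_{\theta\theta}n_\varepsilon-\partial_{xx}n_\varepsilon+Ln_\varepsilon=n_\varepsilon(R-\rho_\varepsilon)$ in $\Omega\times]-A,A[$ ($L$ acting in $x$), $\partial_{\nu_x}n_\varepsilon=0$ on $\partial\Omega\times]-A,A[$, $\partial_{\nu_\theta}n_\varepsilon=0$ on $\Omega\times\{\pm A\}$. *)

(* Defs.v *)
From Stdlib Require Import Reals.
From Coquelicot Require Import Coquelicot.
Open Scope R_scope.

Fixpoint sumI (g : nat -> R) (m : nat) : R :=
  match m with O => 0 | S k => sumI g k + g k end.

Definition inOmega (m : nat) (a b : nat -> R) (x : R) : Prop :=
  exists i, (i < m)%nat /\ a i < x < b i.
Definition inOmegaBar (m : nat) (a b : nat -> R) (x : R) : Prop :=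
  exists i, (i < m)%nat /\ a i <= x <= b i.

Definition IntOmega (m : nat) (a b : nat -> R) (f : R -> R) : R :=
  sumI (fun i => RInt f (a i) (b i)) m.

Definition Lop (m : nat) (a b : nat -> R) (K : R -> R) (phi : R -> R) (x : R) : R :=
  IntOmega m a b (fun y => (phi x - phi y) * K (x - y)).

Definition dx (f : R -> R -> R) : R -> R -> R := fun x t => Derive (fun y => f y t) x.
Definition dt (f : R -> R -> R) : R -> R -> R := fun x t => Derive (fun s => f x s) t.

Definition cont2 (g : R -> R -> R) : Prop :=
  forall x t, continuous (fun p : R * R => g (fst p) (snd p)) (x, t).

Definition C1_1d (f : R -> R) : Prop :=
  (forall x, ex_derive f x) /\ (forall x, continuous (Derive f) x).

Definition C2_1d (f : R -> R) : Prop :=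
  (forall x, ex_derive f x) /\ (forall x, ex_derive (Derive f) x) /\
  (forall x, continuous (Derive_n f 2) x).

Definition C1_xt (f : R -> R -> R) : Prop :=
  cont2 f /\
  (forall x t, ex_derive (fun y => f y t) x /\ ex_derive (fun s => f x s) t) /\
  cont2 (dx f) /\ cont2 (dt f).

(* C^2 function of (x,theta) (on R^2), as far as the pure second partials go *)
Definition C2_xt (f : R -> R -> R) : Prop :=
  C1_xt f /\
  (forall x t, ex_derive (fun y => dx f y t) x /\ ex_derive (fun s => dt f x s) t) /\
  cont2 (dx (dx f)) /\ cont2 (dt (dt f)).

(* lambda(theta, rho) = lam : principal eigenvalue (eigenvalue with a positive
   eigenfunction) of psi |-> -psi'' + L psi - (R(.,theta) - rho) psi on Omega,
   Neumann boundary conditions *)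
Definition principal_eig1 (m : nat) (a b : nat -> R) (K : R -> R)
  (Rr : R -> R -> R) (theta rho lam : R) : Prop :=
  exists psi : R -> R,
    C2_1d psi /\
    (forall x, inOmega m a b x -> 0 < psi x) /\
    (forall i, (i < m)%nat -> Derive psi (a i) = 0 /\ Derive psi (b i) = 0) /\
    (forall x, inOmega m a b x ->
       - Derive_n psi 2 x + Lop m a b K psi x - (Rr x theta - rho) * psi x
       = lam * psi x).

Definition principal_eig2 (m : nat) (a b : nat -> R) (K : R -> R)
  (Rr : R -> R -> R) (A eps mu : R) : Prop :=
  exists xi : R -> R -> R,
    C2_xt xi /\
    (forall x t, inOmega m a b x -> -A < t < A -> 0 < xi x t) /\
    (forall i t, (i < m)%nat -> -A < t < A ->
        dx xi (a i) t = 0 /\ dx xi (b i) t = 0) /\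
    (forall x, inOmega m a b x -> dt xi x (-A) = 0 /\ dt xi x A = 0) /\
    (forall x t, inOmega m a b x -> -A < t < A ->
       - dx (dx xi) x t - eps ^ 2 * dt (dt xi) x t
       + Lop m a b K (fun y => xi y t) x - Rr x t * xi x t
       = mu * xi x t).

Definition rho_of (A : R) (n : R -> R -> R) : R -> R :=
  fun x => RInt (fun t => n x t) (-A) A.

Definition solE (m : nat) (a b : nat -> R) (K : R -> R)
  (Rr : R -> R -> R) (A eps : R) (n : R -> R -> R) : Prop :=
  C2_xt n /\
  (forall x t, inOmega m a b x -> -A < t < A -> 0 < n x t) /\
  (exists M, forall x t, inOmega m a b x -> -A < t < A -> Rabs (n x t) <= M) /\
  (forall i t, (i < m)%nat -> -A < t < A ->
      dx n (a i) t = 0 /\ dx n (b i) t = 0) /\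
  (forall x, inOmega m a b x -> dt n x (-A) = 0 /\ dt n x A = 0) /\
  (forall x t, inOmega m a b x -> -A < t < A ->
     - eps ^ 2 * dt (dt n) x t - dx (dx n) x t
     + Lop m a b K (fun y => n y t) x
     = n x t * (Rr x t - rho_of A n x)).

(* x^p for x >= 0, p > 0 (with 0^p = 0) *)
Definition powR0 (x p : R) : R := if Rlt_dec 0 x then Rpower x p else 0.

Definition W2p_norm (m : nat) (a b : nat -> R) (p : Rbar) (f : R -> R) : Rbar :=
  match p with
  | Finite q =>
      Finite (sumI (fun k => powR0
                 (IntOmega m a b (fun x => powR0 (Rabs (Derive_n f k x)) q)) (/ q)) 3)
  | p_infty =>
      Rbar_plus (Lub_Rbar (fun y => exists x, inOmega m a b x /\ y = Rabs (f x)))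
      (Rbar_plus (Lub_Rbar (fun y => exists x, inOmega m a b x /\ y = Rabs (Derive f x)))
                 (Lub_Rbar (fun y => exists x, inOmega m a b x /\ y = Rabs (Derive_n f 2 x))))
  | m_infty => p_infty
  end.

(* Main.v *)
Require Import Defs.
From Stdlib Require Import Reals Lra Psatz.
From Coquelicot Require Import Coquelicot.
Open Scope R_scope.

Lemma ball_R (x e y : R) : ball x e y <-> Rabs (y - x) < e.
Proof. reflexivity. Qed.
Lemma minus_R (a b : R) : minus a b = a - b. Proof. reflexivity. Qed.
Lemma plus_R (a b : R) : plus a b = a + b. Proof. reflexivity. Qed.
Lemma scal_R (a b : R) : scal a b = a * b. Proof. reflexivity. Qed.
Lemma opp_R (a : R) : opp a = - a. Proof. reflexivity. Qed.
Lemma zero_R : (zero : R) = 0. Proof. reflexivity. Qed.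

Ltac Rring := match goal with |- @eq _ ?x ?y => change (@eq R x y); ring end.

Definition C2p (g : R -> R -> R) := forall x y, continuity_2d_pt g x y.

Lemma cont2_C2p g : cont2 g -> C2p g.
Proof. intros H x y. apply continuity_2d_pt_filterlim. apply (H x y). Qed.

Lemma C2p_slice2 g x y : C2p g -> continuous (fun t => g x t) y.
Proof.
  intros H.
  apply (continuous_comp_2 (fun _ => x) (fun t => t) g).
  apply continuous_const. apply continuous_id.
  apply continuity_2d_pt_filterlim. apply H.
Qed.
Lemma C2p_slice1 g x y : C2p g -> continuous (fun t => g t y) x.
Proof.
  intros H.
  apply (continuous_comp_2 (fun t => t) (fun _ => y) g).
  apply continuous_id. apply continuous_const.
  apply continuity_2d_pt_filterlim. apply H.
Qed.
Lemma C2p_swap g : C2p g -> C2p (fun x y => g y x).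
Proof.
  intros H x y. apply continuity_2d_pt_filterlim.
  apply (continuous_comp_2 (fun p : R*R => snd p) (fun p : R*R => fst p) g (x,y)).
  apply continuous_snd. apply continuous_fst.
  apply continuity_2d_pt_filterlim. apply H.
Qed.

Lemma exRInt_slice2 g x c d : C2p g -> ex_RInt (fun t => g x t) c d.
Proof. intros H. apply (ex_RInt_continuous (V:=R_CompleteNormedModule)). intros; apply C2p_slice2; auto. Qed.
Lemma exRInt_slice1 g y c d : C2p g -> ex_RInt (fun t => g t y) c d.
Proof. intros H. apply (ex_RInt_continuous (V:=R_CompleteNormedModule)). intros; apply C2p_slice1; auto. Qed.

Lemma abs_RInt_le_const' (f : R -> R) c d M :
  ex_RInt f c d -> (forall t, Rmin c d <= t <= Rmax c d -> Rabs (f t) <= M) ->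
  Rabs (RInt f c d) <= Rabs (d - c) * M.
Proof.
  intros Hex Hb. destruct (Rle_dec c d) as [Hcd|Hcd].
  - rewrite (Rabs_right (d - c)) by lra. apply abs_RInt_le_const; auto.
    intros t Ht; apply Hb. rewrite Rmin_left, Rmax_right; lra.
  - rewrite <- (opp_RInt_swap f d c) by (apply ex_RInt_swap; exact Hex). rewrite opp_R, Rabs_Ropp.
    rewrite (Rabs_left (d - c)) by lra. replace (- (d - c)) with (c - d) by ring.
    apply abs_RInt_le_const; [lra| apply ex_RInt_swap; auto|].
    intros t Ht; apply Hb. rewrite Rmin_right, Rmax_left; lra.
Qed.

Lemma small_bound D eps : 0 <= D -> 0 < eps -> D * (eps / (D + 1)) < eps.
Proof.
  intros HD He. replace (D * (eps / (D + 1))) with (eps - eps / (D + 1)) by (field; lra).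
  assert (0 < eps / (D + 1)) by (apply Rdiv_lt_0_compat; lra). lra.
Qed.

Lemma param_cont g c d x0 : C2p g -> continuous (fun x => RInt (fun t => g x t) c d) x0.
Proof.
  intros H. apply filterlim_locally. intro eps.
  assert (He' : 0 < eps / (Rabs (d - c) + 1)).
  { apply Rdiv_lt_0_compat. apply cond_pos. pose proof (Rabs_pos (d - c)); lra. }
  destruct (uniform_continuity_2d_1d' g (Rmin c d) (Rmax c d) x0 (fun t _ => H x0 t)
     (mkposreal _ He')) as [delta Hd].
  exists delta. intros x Hx. apply ball_R in Hx; apply ball_R. cbv beta.
  rewrite <- minus_R, <- (RInt_minus (V:=R_CompleteNormedModule)) by (apply exRInt_slice2; auto).
  eapply Rle_lt_trans. apply abs_RInt_le_const' with (M := eps / (Rabs (d - c) + 1)).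
  apply (ex_RInt_minus (V:=R_CompleteNormedModule)); apply exRInt_slice2; auto.
  intros t Ht. left. rewrite minus_R. simpl in Hd. apply (Hd t x0 t x); auto.
  split; pose proof (cond_pos delta); lra.
  split; apply Rabs_lt_between' in Hx; lra.
  rewrite Rminus_eq_0, Rabs_R0. apply cond_pos.
  apply small_bound. apply Rabs_pos. apply cond_pos.
Qed.

Lemma param_deriv f c d x :
  (forall x t, ex_derive (fun y => f y t) x) -> C2p f -> C2p (dx f) ->
  is_derive (fun x => RInt (fun t => f x t) c d) x (RInt (fun t => dx f x t) c d).
Proof.
  intros Hd Hf Hdf.
  apply (is_derive_RInt_param f c d x).
  - exists (mkposreal 1 Rlt_0_1). intros; apply Hd.
  - intros t _. apply Hdf.
  - exists (mkposreal 1 Rlt_0_1). intros; apply exRInt_slice2; auto.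
Qed.

Lemma RInt_zero_fun a b : RInt (fun _ => 0) a b = 0.
Proof. rewrite (RInt_const (V:=R_CompleteNormedModule)). apply Rmult_0_r. Qed.

Lemma FTC_upper (h : R -> R) c s :
  (forall t, continuous h t) -> is_derive (fun s => RInt h c s) s (h s).
Proof.
  intros Hh. apply (is_derive_RInt (V:=R_CompleteNormedModule) h (fun s => RInt h c s) c s).
  - exists (mkposreal 1 Rlt_0_1). intros; apply (RInt_correct (V:=R_CompleteNormedModule)).
    apply (ex_RInt_continuous (V:=R_CompleteNormedModule)). intros; apply Hh.
  - apply Hh.
Qed.

Lemma fubini g a b c d : C2p g ->
  RInt (fun t => RInt (fun y => g y t) a b) c d =
  RInt (fun y => RInt (fun t => g y t) c d) a b.
Proof.
  intros Hg.
  set (F := fun s => RInt (fun t => RInt (fun y => g y t) a b) c s).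
  set (G := fun s => RInt (fun y => RInt (fun t => g y t) c s) a b).
  assert (HF : forall s, is_derive F s (RInt (fun y => g y s) a b)).
  { intro s. unfold F. apply (FTC_upper (fun t => RInt (fun y => g y t) a b)).
    intro t. apply (param_cont (fun t y => g y t)). apply C2p_swap; auto. }
  assert (HD : forall y u, Derive (fun z => RInt (fun t => g y t) c z) u = g y u).
  { intros y u. apply is_derive_unique. apply (FTC_upper (fun t => g y t)).
    intro t; apply C2p_slice2; auto. }
  assert (HG : forall s, is_derive G s (RInt (fun y => g y s) a b)).
  { intro s. unfold G.
    replace (RInt (fun y => g y s) a b) with
      (RInt (fun y => Derive (fun z => RInt (fun t => g y t) c z) s) a b).
    2:{ apply RInt_ext. intros; apply HD. }
    apply (is_derive_RInt_param (fun z y => RInt (fun t => g y t) c z) a b s).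
    - exists (mkposreal 1 Rlt_0_1). intros z _ t _.
      eexists. apply (FTC_upper (fun t0 => g t t0)). intro; apply C2p_slice2; auto.
    - intros t _. apply continuity_2d_pt_ext with (f := fun u v => g v u).
      intros; symmetry; apply HD. apply C2p_swap; auto.
    - exists (mkposreal 1 Rlt_0_1). intros z _.
      apply (ex_RInt_continuous (V:=R_CompleteNormedModule)). intros.
      apply (param_cont (fun y t => g y t)); auto. }
  assert (HH : forall s, is_derive (fun s => F s - G s) s 0).
  { intro s. replace 0 with (RInt (fun y => g y s) a b - RInt (fun y => g y s) a b) by ring.
    apply (is_derive_minus F G). apply HF. apply HG. }
  destruct (MVT_gen (fun s => F s - G s) c d (fun _ => 0)) as [z [_ Hz]].
  - intros; apply HH.
  - intros. apply continuity_pt_filterlim. apply (ex_derive_continuous (K:=R_AbsRing) (V:=R_NormedModule) (fun s => F s - G s)). eexists; apply HH.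
  - assert (Hc : F c - G c = 0).
    { unfold F, G. rewrite RInt_point.
      rewrite (RInt_ext _ (fun _ => 0)). rewrite RInt_zero_fun. change (0 - 0 = 0). ring.
      intros; rewrite RInt_point; reflexivity. }
    fold (F d) (G d). lra.
Qed.

Lemma lin2 (f g : R -> R) c d If Ig c1 c2 :
  is_RInt f c d If -> is_RInt g c d Ig ->
  is_RInt (fun t => c1 * f t + c2 * g t) c d (c1 * If + c2 * Ig).
Proof.
  intros Hf Hg.
  exact (is_RInt_plus _ _ c d _ _ (is_RInt_scal _ c d c1 _ Hf) (is_RInt_scal _ c d c2 _ Hg)).
Qed.

Lemma is_RInt_sumI (G : nat -> R -> R) (I : nat -> R) c d m :
  (forall i, (i < m)%nat -> is_RInt (G i) c d (I i)) ->
  is_RInt (fun t => sumI (fun i => G i t) m) c d (sumI I m).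
Proof.
  induction m as [|m IH]; intros H; simpl.
  - pose proof (is_RInt_const (V:=R_NormedModule) c d 0) as H0.
    replace (scal (d - c) (0:R_NormedModule)) with 0 in H0 by (apply sym_eq, Rmult_0_r). exact H0.
  - replace (sumI I m + I m) with (1 * sumI I m + 1 * I m) by ring.
    apply is_RInt_ext with (f := fun t => 1 * sumI (fun i => G i t) m + 1 * G m t).
    intros; Rring.
    apply lin2. apply IH; intros; apply H; lia. apply H; lia.
Qed.

Lemma cont_sumI (G : nat -> R -> R) m x :
  (forall i, (i < m)%nat -> continuous (G i) x) ->
  continuous (fun t => sumI (fun i => G i t) m) x.
Proof.
  induction m as [|m IH]; intros H; simpl.
  - apply continuous_const.
  - apply (continuous_plus (fun t => sumI (fun i => G i t) m) (G m)).
    apply IH; intros; apply H; lia. apply H; lia.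
Qed.

Lemma cont_pt (f : R -> R) x : continuous f x -> continuity_pt f x.
Proof. intros H; apply continuity_pt_filterlim; exact H. Qed.
Lemma pt_cont (f : R -> R) x : continuity_pt f x -> continuous f x.
Proof. intros H; apply continuity_pt_filterlim; exact H. Qed.

Lemma clos_ge (f : R -> R) a b x0 :
  continuous f x0 -> a < b -> a <= x0 <= b ->
  (forall x, a < x < b -> 0 <= f x) -> 0 <= f x0.
Proof.
  intros Hc Hab Hx H.
  destruct (Rle_or_lt 0 (f x0)) as [|Hneg]; auto. exfalso.
  apply cont_pt in Hc.
  destruct (Hc (- f x0) ltac:(lra)) as [del [Hdel Hd]].
  set (mid := (a + b) / 2).
  set (s := Rmin 1 (del / (b - a)) / 2).
  assert (Hs0 : 0 < Rmin 1 (del / (b - a))).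
  { apply Rmin_pos. lra. apply Rdiv_lt_0_compat; lra. }
  assert (Hs1 : Rmin 1 (del / (b - a)) <= 1) by apply Rmin_l.
  assert (Hs2 : Rmin 1 (del / (b - a)) <= del / (b - a)) by apply Rmin_r.
  assert (Hs3 : Rmin 1 (del / (b - a)) * (b - a) <= del).
  { apply Rmult_le_compat_r with (r := b - a) in Hs2; [|lra].
    replace (del / (b - a) * (b - a)) with del in Hs2 by (field; lra). lra. }
  set (x := x0 + s * (mid - x0)).
  assert (Hx1 : a < x < b).
  { unfold x, s, mid. split; nra. }
  specialize (H x Hx1).
  assert (Hdx : Rabs (x - x0) < del).
  { unfold x. replace (x0 + s * (mid - x0) - x0) with (s * (mid - x0)) by ring.
    rewrite Rabs_mult. rewrite Rabs_right by (unfold s; lra).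
    assert (Rabs (mid - x0) <= b - a) by (unfold mid; apply Rabs_le; lra).
    unfold s. nra. }
  destruct (Req_dec x x0) as [Heq|Hneq].
  { rewrite Heq in H; lra. }
  specialize (Hd x (conj (conj I (not_eq_sym Hneq)) Hdx)). simpl in Hd. unfold R_dist in Hd.
  apply Rabs_lt_between' in Hd. lra.
Qed.

Lemma deriv_sign (f : R -> R) x0 l : is_derive f x0 l -> l <> 0 ->
  exists del, 0 < del /\ forall h, h <> 0 -> Rabs h < del -> 0 < (f (x0 + h) - f x0) * h * l.
Proof.
  intros Hd Hl. apply is_derive_Reals in Hd.
  assert (Hpos : 0 < Rabs l / 2) by (pose proof (Rabs_pos_lt l Hl); lra).
  destruct (Hd _ Hpos) as [del Hdel].
  exists del. split. apply cond_pos. intros h Hh0 Hh.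
  specialize (Hdel h Hh0 Hh).
  set (q := (f (x0 + h) - f x0) / h) in *.
  replace ((f (x0 + h) - f x0) * h * l) with (q * l * (h * h)) by (unfold q; field; auto).
  apply Rmult_lt_0_compat.
  - apply Rabs_lt_between' in Hdel.
    destruct (Rlt_or_le 0 l) as [Hl'|Hl'].
    + rewrite Rabs_right in Hdel by lra. nra.
    + rewrite Rabs_left in Hdel by lra. assert (l < 0) by lra. nra.
  - assert (0 < h * h) by (destruct (Rlt_or_le 0 h); nra). auto.
Qed.

Lemma MVT_D (f : R -> R) u v : (forall x, ex_derive f x) ->
  exists c, Rmin u v <= c <= Rmax u v /\ f v - f u = Derive f c * (v - u).
Proof.
  intros Hf.
  destruct (MVT_gen f u v (Derive f)) as [c [Hc Heq]].
  - intros; apply Derive_correct; auto.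
  - intros; apply cont_pt. apply (ex_derive_continuous (K:=R_AbsRing) (V:=R_NormedModule)); auto.
  - exists c; split; auto.
Qed.

Lemma second_deriv_min (f : R -> R) x0 l : (forall x, ex_derive f x) ->
  is_derive (Derive f) x0 l -> Derive f x0 = 0 -> 0 < l ->
  exists del, 0 < del /\ forall h, h <> 0 -> Rabs h < del -> f x0 < f (x0 + h).
Proof.
  intros Hf Hd H0 Hl.
  destruct (deriv_sign _ _ _ Hd ltac:(lra)) as [del [Hdel Hs]].
  exists del; split; auto. intros h Hh0 Hh.
  assert (Hs' : forall h', h' <> 0 -> Rabs h' < del -> 0 < Derive f (x0 + h') * h').
  { intros h' H1 H2. specialize (Hs h' H1 H2). rewrite H0 in Hs.
    replace ((Derive f (x0 + h') - 0) * h' * l) with ((Derive f (x0 + h') * h') * l) in Hs by ring.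
    nra. }
  destruct (MVT_D f (x0 + h / 2) (x0 + h) Hf) as [c1 [Hc1 E1]].
  destruct (MVT_D f x0 (x0 + h / 2) Hf) as [c2 [Hc2 E2]].
  assert (A1 : 0 < Derive f c1 * h).
  { replace c1 with (x0 + (c1 - x0)) by ring.
    destruct (Rlt_or_le 0 h) as [Hp|Hn].
    - rewrite Rmin_left in Hc1 by lra; rewrite Rmax_right in Hc1 by lra.
      assert (0 < Derive f (x0 + (c1 - x0)) * (c1 - x0)).
      { apply Hs'. lra. rewrite Rabs_right by lra. rewrite Rabs_right in Hh by lra. lra. }
      nra.
    - assert (h < 0) by lra.
      rewrite Rmin_right in Hc1 by lra; rewrite Rmax_left in Hc1 by lra.
      assert (0 < Derive f (x0 + (c1 - x0)) * (c1 - x0)).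
      { apply Hs'. lra. rewrite Rabs_left by lra. rewrite Rabs_left in Hh by lra. lra. }
      nra. }
  assert (A2 : 0 <= Derive f c2 * h).
  { destruct (Req_dec c2 x0) as [E|E]. { rewrite E, H0; lra. }
    replace c2 with (x0 + (c2 - x0)) by ring.
    destruct (Rlt_or_le 0 h) as [Hp|Hn].
    - rewrite Rmin_left in Hc2 by lra; rewrite Rmax_right in Hc2 by lra.
      assert (0 < Derive f (x0 + (c2 - x0)) * (c2 - x0)).
      { apply Hs'. lra. rewrite Rabs_right by lra. rewrite Rabs_right in Hh by lra. lra. }
      nra.
    - assert (h < 0) by lra.
      rewrite Rmin_right in Hc2 by lra; rewrite Rmax_left in Hc2 by lra.
      assert (0 < Derive f (x0 + (c2 - x0)) * (c2 - x0)).
      { apply Hs'. lra. rewrite Rabs_left by lra. rewrite Rabs_left in Hh by lra. lra. }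
      nra. }
  assert (E1' : f (x0 + h) - f (x0 + h / 2) = Derive f c1 * (h / 2)).
  { rewrite E1. f_equal. field. }
  assert (E2' : f (x0 + h / 2) - f x0 = Derive f c2 * (h / 2)).
  { rewrite E2. f_equal. field. }
  nra.
Qed.

Lemma C2_parts n : C2_xt n ->
  C2p n /\ C2p (dx n) /\ C2p (dx (dx n)) /\ C2p (dt n) /\ C2p (dt (dt n)) /\
  (forall x t, ex_derive (fun y => n y t) x) /\
  (forall x t, ex_derive (fun y => dx n y t) x) /\
  (forall x t, ex_derive (fun s => dt n x s) t) /\
  (forall x t, ex_derive (fun s => n x s) t).
Proof.
  intros [[H1 [H2 [H3 H4]]] [H5 [H6 H7]]].
  split; [apply cont2_C2p; exact H1|].
  split; [apply cont2_C2p; exact H3|].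
  split; [apply cont2_C2p; exact H6|].
  split; [apply cont2_C2p; exact H4|].
  split; [apply cont2_C2p; exact H7|].
  split; [intros x t; apply (H2 x t)|].
  split; [intros x t; apply (H5 x t)|].
  split; [intros x t; apply (H5 x t)|].
  intros x t; apply (H2 x t).
Qed.

Lemma rho_d1 A n x : C2_xt n ->
  is_derive (rho_of A n) x (RInt (fun t => dx n x t) (-A) A).
Proof.
  intros H; destruct (C2_parts n H) as [Hn [Hdn [Hddn [_ [_ [Ed [Edd _]]]]]]].
  unfold rho_of. apply param_deriv; auto.
Qed.

Lemma rho_D1 A n x : C2_xt n -> Derive (rho_of A n) x = RInt (fun t => dx n x t) (-A) A.
Proof. intros H; apply is_derive_unique, rho_d1; auto. Qed.

Lemma rho_d2 A n x : C2_xt n ->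
  is_derive (Derive (rho_of A n)) x (RInt (fun t => dx (dx n) x t) (-A) A).
Proof.
  intros H; destruct (C2_parts n H) as [Hn [Hdn [Hddn [_ [_ [Ed [Edd _]]]]]]].
  apply is_derive_ext with (f := fun x => RInt (fun t => dx n x t) (-A) A).
  intros; symmetry; apply rho_D1; auto.
  apply (param_deriv (dx n)); auto.
Qed.

Lemma rho_D2 A n x : C2_xt n ->
  Derive (Derive (rho_of A n)) x = RInt (fun t => dx (dx n) x t) (-A) A.
Proof. intros H; apply is_derive_unique, rho_d2; auto. Qed.

Lemma rho_cont A n x : C2_xt n -> continuous (rho_of A n) x.
Proof.
  intros H. apply (ex_derive_continuous (K:=R_AbsRing) (V:=R_NormedModule)).
  eexists; apply rho_d1; auto.
Qed.

Lemma rho_D1_cont A n x : C2_xt n -> continuous (Derive (rho_of A n)) x.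
Proof.
  intros H. apply (ex_derive_continuous (K:=R_AbsRing) (V:=R_NormedModule)).
  eexists; apply rho_d2; auto.
Qed.

Lemma rho_D2_cont A n x : C2_xt n -> continuous (Derive (Derive (rho_of A n))) x.
Proof.
  intros H; destruct (C2_parts n H) as [Hn [Hdn [Hddn _]]].
  apply continuous_ext with (f := fun x => RInt (fun t => dx (dx n) x t) (-A) A).
  intros; symmetry; apply rho_D2; auto.
  apply param_cont; auto.
Qed.

Lemma cont_K_C2 (K : R -> R) x : (forall z, continuous K z) -> C2p (fun y (t : R) => K (x - y)).
Proof.
  intros HK u v. apply (continuity_1d_2d_pt_comp K (fun y (t : R) => x - y)).
  apply cont_pt, HK.
  apply continuity_2d_pt_minus. apply continuity_2d_pt_const. apply continuity_2d_pt_id1.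
Qed.

Lemma cont_slice_C2 (n : R -> R -> R) x : C2p n -> C2p (fun (y : R) t => n x t).
Proof.
  intros Hn u v. apply (continuity_1d_2d_pt_comp (fun t => n x t) (fun (y : R) t => t)).
  apply cont_pt, C2p_slice2; auto. apply continuity_2d_pt_id2.
Qed.

Lemma RInt_diff_scal (f g : R -> R) c d k :
  ex_RInt f c d -> ex_RInt g c d ->
  RInt (fun t => (f t - g t) * k) c d = (RInt f c d - RInt g c d) * k.
Proof.
  intros Hf Hg. apply is_RInt_unique.
  apply is_RInt_ext with (f := fun t => k * f t + (- k) * g t).
  intros; Rring.
  replace ((RInt f c d - RInt g c d) * k) with (k * RInt f c d + (- k) * RInt g c d) by ring.
  apply lin2; apply (RInt_correct (V:=R_CompleteNormedModule)); auto.
Qed.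

Lemma Lop_int A n m a b K x : C2_xt n -> (forall z, continuous K z) ->
  is_RInt (fun t => Lop m a b K (fun y => n y t) x) (-A) A (Lop m a b K (rho_of A n) x).
Proof.
  intros H HK. destruct (C2_parts n H) as [Hn _].
  unfold Lop, IntOmega.
  apply (is_RInt_sumI (fun i t => RInt (fun y => (n x t - n y t) * K (x - y)) (a i) (b i))
     (fun i => RInt (fun y => (rho_of A n x - rho_of A n y) * K (x - y)) (a i) (b i))).
  intros i _.
  set (g := fun y t => (n x t - n y t) * K (x - y)).
  assert (Hg : C2p g).
  { intros u v. unfold g. apply continuity_2d_pt_mult.
    apply continuity_2d_pt_minus. apply cont_slice_C2; auto. apply Hn.
    apply cont_K_C2; auto. }
  replace (RInt (fun y => (rho_of A n x - rho_of A n y) * K (x - y)) (a i) (b i))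
    with (RInt (fun t => RInt (fun y => g y t) (a i) (b i)) (-A) A).
  - apply (RInt_correct (V:=R_CompleteNormedModule)).
    apply (ex_RInt_continuous (V:=R_CompleteNormedModule)). intros.
    apply (param_cont (fun t y => g y t)). apply C2p_swap; auto.
  - rewrite fubini by auto. apply RInt_ext. intros y _. unfold g, rho_of.
    apply RInt_diff_scal; apply exRInt_slice2; auto.
Qed.

Lemma eq_Omega A m a b K Rr eps n x :
  C2_xt n -> (forall z, continuous K z) -> C1_xt Rr ->
  (forall x, inOmega m a b x -> dt n x (-A) = 0 /\ dt n x A = 0) ->
  (forall x t, inOmega m a b x -> -A < t < A ->
     - eps ^ 2 * dt (dt n) x t - dx (dx n) x t
     + Lop m a b K (fun y => n y t) x
     = n x t * (Rr x t - rho_of A n x)) ->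
  0 < A -> inOmega m a b x ->
  - Derive (Derive (rho_of A n)) x + Lop m a b K (rho_of A n) x
  = RInt (fun t => n x t * Rr x t) (-A) A - rho_of A n x * rho_of A n x.
Proof.
  intros Hn2 HK HR Hbt Heq HA Hx.
  destruct (C2_parts n Hn2) as [Hn [Hdn [Hddn [Hdtn [Hdttn [Ed [Edd [Edt Edt0]]]]]]]].
  assert (HRp : C2p Rr) by (apply cont2_C2p; apply HR).
  assert (H1 : is_RInt (fun t => dt (dt n) x t) (-A) A 0).
  { replace 0 with (RInt (fun t => dt (dt n) x t) (-A) A).
    apply (RInt_correct (V:=R_CompleteNormedModule)). apply exRInt_slice2; auto.
    change (RInt (Derive (fun s => dt n x s)) (-A) A = 0).
    rewrite RInt_Derive. destruct (Hbt x Hx) as [E1 E2]. rewrite E1, E2. apply Rminus_0_r.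
    intros; apply Edt. intros; apply (C2p_slice2 (dt (dt n))); auto. }
  assert (H2 : is_RInt (fun t => dx (dx n) x t) (-A) A (Derive (Derive (rho_of A n)) x)).
  { rewrite rho_D2 by auto. apply (RInt_correct (V:=R_CompleteNormedModule)).
    apply exRInt_slice2; auto. }
  assert (H3 := Lop_int A n m a b K x Hn2 HK).
  assert (H4 : is_RInt (fun t => n x t * Rr x t) (-A) A (RInt (fun t => n x t * Rr x t) (-A) A)).
  { apply (RInt_correct (V:=R_CompleteNormedModule)).
    apply (exRInt_slice2 (fun x t => n x t * Rr x t)). intros u v.
    apply continuity_2d_pt_mult; auto. }
  assert (H5 : is_RInt (fun t => n x t) (-A) A (rho_of A n x)).
  { apply (RInt_correct (V:=R_CompleteNormedModule)). apply exRInt_slice2; auto. }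
  assert (EL : RInt (fun t => 1 * ((- eps ^ 2) * dt (dt n) x t + (-1) * dx (dx n) x t)
                  + 1 * Lop m a b K (fun y => n y t) x) (-A) A
           = 1 * ((- eps ^ 2) * 0 + (-1) * Derive (Derive (rho_of A n)) x)
             + 1 * Lop m a b K (rho_of A n) x).
  { apply is_RInt_unique. apply lin2; [apply lin2|]; auto. }
  assert (ER : RInt (fun t => 1 * (n x t * Rr x t) + (- rho_of A n x) * n x t) (-A) A
           = 1 * RInt (fun t => n x t * Rr x t) (-A) A + (- rho_of A n x) * rho_of A n x).
  { apply is_RInt_unique. apply lin2; auto. }
  assert (EE : RInt (fun t => 1 * ((- eps ^ 2) * dt (dt n) x t + (-1) * dx (dx n) x t)
                  + 1 * Lop m a b K (fun y => n y t) x) (-A) A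
             = RInt (fun t => 1 * (n x t * Rr x t) + (- rho_of A n x) * n x t) (-A) A).
  { apply RInt_ext. intros t Ht. rewrite Rmin_left, Rmax_right in Ht by lra.
    specialize (Heq x t Hx Ht). lra. }
  rewrite EL, ER in EE. lra.
Qed.

Lemma sumI_abs (g h : nat -> R) m : (forall i, (i < m)%nat -> Rabs (g i) <= h i) ->
  Rabs (sumI g m) <= sumI h m.
Proof.
  induction m as [|m IH]; intros H; simpl.
  - rewrite Rabs_R0; lra.
  - eapply Rle_trans. apply Rabs_triang.
    apply Rplus_le_compat. apply IH; intros; apply H; lia. apply H; lia.
Qed.

Lemma sumI_nonneg (g : nat -> R) m : (forall i, (i < m)%nat -> 0 <= g i) -> 0 <= sumI g m.
Proof.
  induction m as [|m IH]; intros H; simpl. lra.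
  assert (0 <= sumI g m) by (apply IH; intros; apply H; lia).
  assert (0 <= g m) by (apply H; lia). lra.
Qed.

Lemma sumI_le (g h : nat -> R) m : (forall i, (i < m)%nat -> g i <= h i) -> sumI g m <= sumI h m.
Proof.
  induction m as [|m IH]; intros H; simpl. lra.
  assert (sumI g m <= sumI h m) by (apply IH; intros; apply H; lia).
  assert (g m <= h m) by (apply H; lia). lra.
Qed.

Lemma sumI_scal (g : nat -> R) m M : sumI (fun i => g i * M) m = sumI g m * M.
Proof. induction m as [|m IH]; simpl. ring. rewrite IH. ring. Qed.

Lemma sumI_term (g : nat -> R) m i : (forall j, (j < m)%nat -> 0 <= g j) -> (i < m)%nat ->
  g i <= sumI g m.
Proof.
  induction m as [|m IH]; intros H Hi; simpl. lia.
  destruct (Nat.eq_dec i m) as [->|Hne].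
  - assert (0 <= sumI g m) by (apply sumI_nonneg; intros; apply H; lia). lra.
  - assert (g i <= sumI g m) by (apply IH; [intros; apply H; lia | lia]).
    assert (0 <= g m) by (apply H; lia). lra.
Qed.

Lemma RInt_ge0 (f : R -> R) a b : a <= b -> ex_RInt f a b ->
  (forall x, a < x < b -> 0 <= f x) -> 0 <= RInt f a b.
Proof.
  intros Hab Hex H. rewrite <- (RInt_zero_fun a b). apply RInt_le; auto.
  apply (ex_RInt_const (V:=R_CompleteNormedModule)).
Qed.

Lemma near_point a b x0 del : a < b -> a <= x0 <= b -> 0 < del ->
  exists h, h <> 0 /\ Rabs h < del /\ a <= x0 + h <= b.
Proof.
  intros Hab Hx Hd.
  destruct (Rlt_or_le x0 b) as [Hl|Hl].
  - exists (Rmin del (b - x0) / 2).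
    assert (0 < Rmin del (b - x0)) by (apply Rmin_pos; lra).
    pose proof (Rmin_l del (b - x0)); pose proof (Rmin_r del (b - x0)).
    split; [lra|]. rewrite Rabs_right by lra. split; lra.
  - exists (- (Rmin del (b - a) / 2)).
    assert (0 < Rmin del (b - a)) by (apply Rmin_pos; lra).
    pose proof (Rmin_l del (b - a)); pose proof (Rmin_r del (b - a)).
    split; [lra|]. rewrite Rabs_Ropp, Rabs_right by lra. split; lra.
Qed.

Lemma near_point_sign a b x0 del l : a < x0 < b -> 0 < del -> l <> 0 ->
  exists h, Rabs h < del /\ a < x0 + h < b /\ 0 < h * l.
Proof.
  intros Hx Hd Hl.
  set (r := Rmin del (Rmin (x0 - a) (b - x0))).
  assert (Hr : 0 < r) by (apply Rmin_pos; [lra| apply Rmin_pos; lra]).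
  pose proof (Rmin_l del (Rmin (x0 - a) (b - x0))).
  pose proof (Rmin_r del (Rmin (x0 - a) (b - x0))).
  pose proof (Rmin_l (x0 - a) (b - x0)). pose proof (Rmin_r (x0 - a) (b - x0)).
  fold r in H, H0.
  destruct (Rlt_or_le 0 l) as [Hp|Hn].
  - exists (r / 2). rewrite Rabs_right by lra. split; [lra|]. split; [lra|]. nra.
  - exists (- (r / 2)). rewrite Rabs_Ropp, Rabs_right by lra. split; [lra|]. split; [lra|].
    assert (l < 0) by lra. nra.
Qed.

Lemma max_exists (f : R -> R) m a b : (1 <= m)%nat -> (forall i, (i < m)%nat -> a i < b i) ->
  (forall x, continuous f x) ->
  exists x0, inOmegaBar m a b x0 /\ forall y, inOmegaBar m a b y -> f y <= f x0.
Proof.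
  intros Hm Hab Hf.
  assert (Hk : forall k, (k < m)%nat -> exists x0,
     (exists i, (i < S k)%nat /\ a i <= x0 <= b i) /\
     forall y, (exists i, (i < S k)%nat /\ a i <= y <= b i) -> f y <= f x0).
  { induction k as [|k IH]; intros Hkm.
    - destruct (continuity_ab_maj f (a 0%nat) (b 0%nat)) as [x0 [H1 H2]].
      + left; apply Hab; lia.
      + intros; apply cont_pt, Hf.
      + exists x0. split. exists 0%nat; split; auto.
        intros y [i [Hi Hy]]. assert (i = 0%nat) by lia. subst; auto.
    - destruct (IH ltac:(lia)) as [x1 [Hx1 Hm1]].
      destruct (continuity_ab_maj f (a (S k)) (b (S k))) as [x2 [H1 H2]].
      + left; apply Hab; lia.
      + intros; apply cont_pt, Hf.
      + destruct (Rle_or_lt (f x1) (f x2)) as [Hle|Hlt].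
        * exists x2. split. exists (S k); split; auto.
          intros y [i [Hi Hy]]. destruct (Nat.eq_dec i (S k)) as [->|Hne]. auto.
          apply Rle_trans with (f x1); auto. apply Hm1. exists i; split; auto; lia.
        * exists x1. split. destruct Hx1 as [i [Hi Hi']]. exists i; split; auto.
          intros y [i [Hi Hy]]. destruct (Nat.eq_dec i (S k)) as [->|Hne].
          apply Rle_trans with (f x2); auto. lra.
          apply Hm1. exists i; split; auto; lia. }
  destruct (Hk (m - 1)%nat ltac:(lia)) as [x0 [Hx0 Hmax]].
  exists x0. split.
  - destruct Hx0 as [i [Hi H]]. exists i; split; auto; lia.
  - intros y [i [Hi Hy]]. apply Hmax. exists i; split; auto; lia.
Qed.

Definition gL (f K : R -> R) := fun x y => (f x - f y) * K (x - y).

Lemma C2p_gL f K : (forall z, continuous f z) -> (forall z, continuous K z) -> C2p (gL f K).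
Proof.
  intros Hf HK u v. unfold gL. apply continuity_2d_pt_mult.
  - apply continuity_2d_pt_minus.
    apply (continuity_1d_2d_pt_comp f (fun x (y : R) => x)). apply cont_pt, Hf. apply continuity_2d_pt_id1.
    apply (continuity_1d_2d_pt_comp f (fun (x : R) y => y)). apply cont_pt, Hf. apply continuity_2d_pt_id2.
  - apply (continuity_1d_2d_pt_comp K (fun x y => x - y)). apply cont_pt, HK.
    apply continuity_2d_pt_minus. apply continuity_2d_pt_id1. apply continuity_2d_pt_id2.
Qed.

Lemma Lop_gL m a b K f x : Lop m a b K f x = sumI (fun i => RInt (fun y => gL f K x y) (a i) (b i)) m.
Proof. reflexivity. Qed.

Lemma Lop_cont m a b K f x : (forall z, continuous f z) -> (forall z, continuous K z) ->
  continuous (Lop m a b K f) x.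
Proof.
  intros Hf HK.
  apply continuous_ext with (f := fun x => sumI (fun i => RInt (fun y => gL f K x y) (a i) (b i)) m).
  intros; symmetry; apply Lop_gL.
  apply (cont_sumI (fun i x => RInt (fun y => gL f K x y) (a i) (b i))).
  intros i _. apply param_cont. apply C2p_gL; auto.
Qed.

Lemma Omega_Bar m a b x : inOmega m a b x -> inOmegaBar m a b x.
Proof. intros [i [Hi H]]. exists i; split; auto; lra. Qed.

Lemma abs_le_inv x y : Rabs x <= y -> -y <= x <= y.
Proof. unfold Rabs; destruct (Rcase_abs x); lra. Qed.

Definition Lsum m (a b : nat -> R) := sumI (fun i => b i - a i) m.

Lemma core A m a b K Rr C_R C_K eps n :
  0 < A -> (1 <= m)%nat -> (forall i, (i < m)%nat -> a i < b i) ->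
  C1_xt Rr ->
  (forall x t, inOmegaBar m a b x -> -A <= t <= A -> Rabs (Rr x t) < C_R) ->
  C1_1d K -> (forall x, 0 < K x < C_K) ->
  solE m a b K Rr A eps n ->
  forall x, inOmegaBar m a b x ->
    (0 <= rho_of A n x <= C_R) /\
    Rabs (Derive (Derive (rho_of A n)) x) <= C_R * C_K * Lsum m a b + 2 * (C_R * C_R) /\
    Rabs (Derive (rho_of A n) x) <= (C_R * C_K * Lsum m a b + 2 * (C_R * C_R)) * Lsum m a b.
Proof.
  intros HA Hm Hab HR HRb HK1 HKb Hsol.
  destruct Hsol as [Hn2 [Hpos [_ [Hneu [Hbt Heq]]]]].
  destruct (C2_parts n Hn2) as [Hn [Hdn [Hddn [Hdtn [Hdttn [Ed [Edd [Edt Edt0]]]]]]]].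
  assert (HK : forall z, continuous K z).
  { intro z. apply (ex_derive_continuous (K:=R_AbsRing) (V:=R_NormedModule)). apply HK1. }
  assert (HRp : C2p Rr) by (apply cont2_C2p; apply HR).
  set (rho := rho_of A n).
  assert (Hrc : forall z, continuous rho z) by (intros; apply rho_cont; auto).
  set (T := fun x => RInt (fun t => n x t * Rr x t) (-A) A).
  assert (HnR : C2p (fun x t => n x t * Rr x t)).
  { intros u v; apply continuity_2d_pt_mult; auto. }
  assert (HE : forall x, inOmegaBar m a b x ->
            - Derive (Derive rho) x + Lop m a b K rho x = T x - rho x * rho x).
  { intros x [i [Hi Hx]].
    set (E := fun x => - Derive (Derive rho) x + Lop m a b K rho x - (T x - rho x * rho x)).
    assert (HEc : forall z, continuous E z).
    { intro z. unfold E.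
      apply (continuous_minus (fun x => - Derive (Derive rho) x + Lop m a b K rho x)
                              (fun x => T x - rho x * rho x)).
      apply (continuous_plus (fun x => - Derive (Derive rho) x) (Lop m a b K rho)).
      apply (continuous_opp (Derive (Derive rho))). apply rho_D2_cont; auto.
      apply Lop_cont; auto.
      apply (continuous_minus T (fun x => rho x * rho x)).
      apply (param_cont (fun x t => n x t * Rr x t)); auto.
      apply (continuous_mult rho rho); auto. }
    assert (HE0 : forall y, a i < y < b i -> E y = 0).
    { intros y Hy. unfold E, rho. rewrite (eq_Omega A m a b K Rr eps n y); auto.
      unfold T, rho. ring. exists i; split; auto. }
    assert (0 <= E x).
    { apply (clos_ge E (a i) (b i)); auto. intros; rewrite HE0; auto; lra. }
    assert (0 <= - E x).
    { apply (clos_ge (fun x => - E x) (a i) (b i)); auto.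
      apply (continuous_opp E); auto. intros; rewrite HE0; auto; lra. }
    unfold E in *. lra. }
  assert (Hnn : forall x t, inOmegaBar m a b x -> -A < t < A -> 0 <= n x t).
  { intros x t [i [Hi Hx]] Ht. apply (clos_ge (fun y => n y t) (a i) (b i)); auto.
    apply C2p_slice1; auto. intros y Hy. left. apply Hpos; auto. exists i; split; auto. }
  assert (Hr0 : forall x, inOmegaBar m a b x -> 0 <= rho x).
  { intros x Hx. unfold rho, rho_of. apply RInt_ge0. lra. apply exRInt_slice2; auto.
    intros; apply Hnn; auto. }
  assert (HT : forall x, inOmegaBar m a b x -> - C_R * rho x <= T x <= C_R * rho x).
  { intros x Hx.
    assert (Hs : forall k, RInt (fun t => k * n x t) (-A) A = k * rho x).
    { intro k. apply is_RInt_unique.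
      exact (is_RInt_scal (V:=R_NormedModule) (fun t => n x t) (-A) A k _
        (RInt_correct (V:=R_CompleteNormedModule) _ _ _ (exRInt_slice2 n x (-A) A Hn))). }
    assert (Hk : forall k, ex_RInt (fun t => k * n x t) (-A) A).
    { intro k. apply (exRInt_slice2 (fun x t => k * n x t)). intros u v.
      apply continuity_2d_pt_mult. apply continuity_2d_pt_const. auto. }
    split.
    - rewrite <- Hs. apply RInt_le. lra. auto.
      apply (exRInt_slice2 (fun x t => n x t * Rr x t)); auto.
      intros t Ht. specialize (Hnn x t Hx Ht). assert (Hb := HRb x t Hx ltac:(lra)).
      apply Rlt_le, abs_le_inv in Hb.
      replace (- C_R * n x t) with (n x t * - C_R) by ring. apply Rmult_le_compat_l; lra.
    - rewrite <- Hs. apply RInt_le. lra.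
      apply (exRInt_slice2 (fun x t => n x t * Rr x t)); auto. auto.
      intros t Ht. specialize (Hnn x t Hx Ht). assert (Hb := HRb x t Hx ltac:(lra)).
      apply Rlt_le, abs_le_inv in Hb.
      rewrite (Rmult_comm C_R). apply Rmult_le_compat_l; lra. }
  assert (Hex1 : forall x, ex_derive rho x) by (intro x; eexists; apply rho_d1; auto).
  assert (Hex2 : forall x, ex_derive (Derive rho) x) by (intro x; eexists; apply rho_d2; auto).
  assert (HD1b : forall i, (i < m)%nat -> Derive rho (a i) = 0 /\ Derive rho (b i) = 0).
  { intros i Hi. unfold rho. rewrite !rho_D1 by auto.
    split; (transitivity (RInt (fun _ => 0) (-A) A); [|apply RInt_zero_fun]);
    apply RInt_ext; intros t Ht; rewrite Rmin_left, Rmax_right in Ht by lra;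
    apply (Hneu i t Hi Ht). }
  assert (HCR : 0 < C_R).
  { assert (Hb : inOmegaBar m a b (a 0%nat)).
    { exists 0%nat. split. lia. assert (a 0%nat < b 0%nat) by (apply Hab; lia). lra. }
    pose proof (HRb (a 0%nat) 0 Hb ltac:(lra)). pose proof (Rabs_pos (Rr (a 0%nat) 0)). lra. }
  destruct (max_exists rho m a b Hm Hab Hrc) as [x0 [Hx0 Hmax]].
  assert (HD1x0 : Derive rho x0 = 0).
  { destruct Hx0 as [i [Hi Hx0']].
    destruct (Req_dec x0 (a i)) as [E|Ha]. rewrite E; exact (proj1 (HD1b i Hi)).
    destruct (Req_dec x0 (b i)) as [E|Hb]. rewrite E; exact (proj2 (HD1b i Hi)).
    destruct (Req_dec (Derive rho x0) 0) as [|Hne]; auto. exfalso.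
    destruct (deriv_sign rho x0 (Derive rho x0) (Derive_correct _ _ (Hex1 x0)) Hne) as [del [Hdel Hs]].
    destruct (near_point_sign (a i) (b i) x0 del (Derive rho x0)) as [h [Hh1 [Hh2 Hh3]]];
      [lra|auto|auto|].
    assert (Hh0 : h <> 0) by (intro E; rewrite E in Hh3; lra).
    specialize (Hs h Hh0 Hh1).
    assert (rho (x0 + h) <= rho x0) by (apply Hmax; exists i; split; auto; lra).
    assert (0 <= (rho x0 - rho (x0 + h)) * (h * Derive rho x0)).
    { apply Rmult_le_pos; lra. }
    rewrite Rmult_assoc in Hs. lra. }
  assert (HD2x0 : Derive (Derive rho) x0 <= 0).
  { destruct (Rle_or_lt (Derive (Derive rho) x0) 0) as [|Hp]; auto. exfalso.
    destruct (second_deriv_min rho x0 _ Hex1 (Derive_correct _ _ (Hex2 x0)) HD1x0 Hp)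
      as [del [Hdel Hs]].
    destruct Hx0 as [i [Hi Hx0']].
    destruct (near_point (a i) (b i) x0 del) as [h [Hh0 [Hh1 Hh2]]]; auto.
    specialize (Hs h Hh0 Hh1).
    assert (rho (x0 + h) <= rho x0) by (apply Hmax; exists i; split; auto).
    lra. }
  assert (HLx0 : 0 <= Lop m a b K rho x0).
  { rewrite Lop_gL. apply sumI_nonneg. intros i Hi. apply RInt_ge0. left; auto.
    apply exRInt_slice2. apply C2p_gL; auto.
    intros y Hy. unfold gL. apply Rmult_le_pos.
    assert (rho y <= rho x0) by (apply Hmax; exists i; split; auto; lra). lra.
    left; apply HKb. }
  assert (Hx0C : rho x0 <= C_R).
  { pose proof (HE x0 Hx0) as E1. pose proof (HT x0 Hx0) as E2. pose proof (Hr0 x0 Hx0) as E3.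
    assert (Q : rho x0 * rho x0 <= C_R * rho x0) by lra.
    destruct (Rle_or_lt (rho x0) C_R) as [|Hc]; auto.
    assert (C_R * rho x0 < rho x0 * rho x0) by (apply Rmult_lt_compat_r; lra). lra. }
  assert (HrC : forall x, inOmegaBar m a b x -> 0 <= rho x <= C_R).
  { intros x Hx. split. apply Hr0; auto. apply Rle_trans with (rho x0); auto. }
  assert (HCK : 0 < C_K) by (destruct (HKb 0); lra).
  assert (HLs : 0 <= Lsum m a b).
  { unfold Lsum. apply sumI_nonneg. intros i Hi. pose proof (Hab i Hi). lra. }
  assert (HLb : forall x, inOmegaBar m a b x -> Rabs (Lop m a b K rho x) <= C_R * C_K * Lsum m a b).
  { intros x Hx. rewrite Lop_gL. unfold Lsum.
    replace (C_R * C_K * sumI (fun i => b i - a i) m)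
      with (sumI (fun i => (b i - a i) * (C_R * C_K)) m) by (rewrite sumI_scal; ring).
    apply sumI_abs. intros i Hi. apply abs_RInt_le_const. left; auto.
    apply exRInt_slice2, C2p_gL; auto.
    intros y Hy. unfold gL. rewrite Rabs_mult.
    assert (0 <= rho y <= C_R) by (apply HrC; exists i; split; auto).
    pose proof (HrC x Hx). specialize (HKb (x - y)).
    apply Rmult_le_compat; try apply Rabs_pos. apply Rabs_le; lra.
    rewrite Rabs_right; lra. }
  assert (HD2b : forall x, inOmegaBar m a b x ->
            Rabs (Derive (Derive rho) x) <= C_R * C_K * Lsum m a b + 2 * (C_R * C_R)).
  { intros x Hx. pose proof (HE x Hx) as E1. pose proof (HT x Hx) as E2.
    pose proof (abs_le_inv _ _ (HLb x Hx)) as E3. pose proof (HrC x Hx) as E4.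
    assert (E5 : C_R * rho x <= C_R * C_R) by (apply Rmult_le_compat_l; lra).
    assert (E6 : rho x * rho x <= C_R * C_R) by (apply Rmult_le_compat; lra).
    assert (E7 : 0 <= rho x * rho x) by (apply Rmult_le_pos; lra).
    apply Rabs_le. lra. }
  intros x Hx. split; [apply HrC; auto|]. split; [apply HD2b; auto|].
  destruct Hx as [i [Hi Hx]].
  destruct (MVT_D (Derive rho) (a i) x Hex2) as [c [Hc Ec]].
  rewrite Rmin_left, Rmax_right in Hc by lra. rewrite (proj1 (HD1b i Hi)) in Ec.
  assert (Hcb : inOmegaBar m a b c) by (exists i; split; auto; lra).
  pose proof (HD2b c Hcb) as E1.
  assert (E2 : b i - a i <= Lsum m a b).
  { unfold Lsum. apply (sumI_term (fun i => b i - a i)); auto. intros j Hj.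
    pose proof (Hab j Hj); lra. }
  replace (Derive rho x) with (Derive (Derive rho) c * (x - a i)) by lra.
  rewrite Rabs_mult, (Rabs_right (x - a i)) by lra.
  apply Rmult_le_compat; try lra. apply Rabs_pos.
Qed.



Lemma powR0_nonneg x p : 0 <= powR0 x p.
Proof. unfold powR0. destruct (Rlt_dec 0 x). unfold Rpower. left; apply exp_pos. lra. Qed.

Lemma powR0_mono x y p : 0 < p -> x <= y -> powR0 x p <= powR0 y p.
Proof.
  intros Hp Hxy. unfold powR0 at 1. destruct (Rlt_dec 0 x) as [Hx|Hx].
  - unfold powR0. destruct (Rlt_dec 0 y) as [Hy|Hy]; [|lra].
    apply Rle_Rpower_l; lra.
  - apply powR0_nonneg.
Qed.

Lemma exp_le' a b : a <= b -> exp a <= exp b.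
Proof. intros H. destruct (Rle_lt_or_eq_dec _ _ H) as [H'|H']. left; apply exp_increasing; auto. rewrite H'; lra. Qed.

Lemma powR0_cont q y0 : 1 <= q -> continuous (fun y => powR0 y q) y0.
Proof.
  intros Hq. destruct (Rlt_or_le 0 y0) as [Hp|Hn].
  - apply continuous_ext_loc with (g := fun y => exp (q * ln y)).
    + exists (mkposreal y0 Hp). intros y Hy. apply ball_R in Hy. simpl in Hy.
      apply Rabs_lt_between' in Hy. unfold powR0. destruct (Rlt_dec 0 y); [reflexivity|lra].
    + apply (ex_derive_continuous (K:=R_AbsRing) (V:=R_NormedModule)).
      auto_derive. auto.
  - destruct (Rle_lt_or_eq_dec _ _ Hn) as [Hneg|Hz].
    + apply continuous_ext_loc with (g := fun _ => 0).
      * assert (Hp' : 0 < - y0) by lra. exists (mkposreal _ Hp'). intros y Hy.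
        apply ball_R in Hy. simpl in Hy. apply Rabs_lt_between' in Hy.
        unfold powR0. destruct (Rlt_dec 0 y); [lra|reflexivity].
      * apply continuous_const.
    + subst y0. apply filterlim_locally. intro eps.
      assert (He : 0 < Rmin 1 eps) by (apply Rmin_pos; [lra| apply cond_pos]).
      exists (mkposreal _ He). intros y Hy. apply ball_R in Hy; apply ball_R. simpl in Hy.
      pose proof (Rmin_l 1 eps). pose proof (Rmin_r 1 eps).
      change (Rabs (y - 0) < Rmin 1 eps) in Hy. rewrite Rminus_0_r in Hy. apply Rabs_lt_between in Hy.
      unfold powR0 at 2. destruct (Rlt_dec 0 0) as [|_]; [lra|].
      unfold powR0. destruct (Rlt_dec 0 y) as [Hy0|Hy0].
      * rewrite Rminus_0_r, Rabs_right by (unfold Rpower; left; apply exp_pos).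
        apply Rle_lt_trans with y; [|lra].
        unfold Rpower. rewrite <- (exp_ln y) at 2 by auto. apply exp_le'.
        assert (ln y <= 0) by (rewrite <- ln_1; apply ln_le; lra). nra.
      * rewrite Rminus_0_r, Rabs_R0. apply cond_pos.
Qed.

Lemma IntOmega_le m a b h M : (forall i, (i < m)%nat -> a i < b i) ->
  (forall z, continuous h z) -> (forall x, inOmega m a b x -> h x <= M) ->
  IntOmega m a b h <= Lsum m a b * M.
Proof.
  intros Hab Hc Hb. unfold IntOmega, Lsum. rewrite <- sumI_scal. apply sumI_le.
  intros i Hi. pose proof (Hab i Hi).
  replace ((b i - a i) * M) with (RInt (fun _ => M) (a i) (b i)).
  2:{ rewrite (RInt_const (V:=R_CompleteNormedModule)). reflexivity. }
  apply RInt_le. lra. apply (ex_RInt_continuous (V:=R_CompleteNormedModule)); auto.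
  apply (ex_RInt_const (V:=R_CompleteNormedModule)).
  intros x Hx. apply Hb. exists i; split; auto.
Qed.

Lemma Lub_bound (E : R -> Prop) B : (exists y0, E y0) -> (forall y, E y -> y <= B) ->
  exists l, Lub_Rbar E = Finite l /\ l <= B.
Proof.
  intros [y0 Hy0] HB. destruct (Lub_Rbar_correct E) as [Hub Hlub].
  destruct (Lub_Rbar E) as [r| |] eqn:Eq.
  - exists r; split; auto. apply (Hlub (Finite B)). intros y Hy; simpl; auto.
  - exfalso. specialize (Hlub (Finite B)). simpl in Hlub. apply Hlub. intros y Hy; simpl; auto.
  - exfalso. specialize (Hub y0 Hy0). simpl in Hub. auto.
Qed.

Theorem lemma3
  (A : R) (HA : 0 < A)
  (m : nat) (a b : nat -> R) (Hm : (1 <= m)%nat)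
  (Hab : forall i, (i < m)%nat -> a i < b i)
  (Hba : forall i, (S i < m)%nat -> b i < a (S i))
  (Rr : R -> R -> R) (C_R : R)
  (HRC1 : C1_xt Rr)
  (HRbd : forall x t, inOmegaBar m a b x -> -A <= t <= A ->
            Rabs (Rr x t) < C_R /\ Rabs (dx Rr x t) < C_R /\ Rabs (dt Rr x t) < C_R)
  (K : R -> R) (c_K C_K : R)
  (HKC1 : C1_1d K) (HKeven : forall x, K (- x) = K x)
  (HcK : 0 < c_K)
  (HKbd : forall x, c_K < K x < C_K /\ Rabs (Derive K x) < C_K)
  (theta0 lam0 : R) (Htheta0 : -A < theta0 < A)
  (Hlam0 : principal_eig1 m a b K Rr theta0 0 lam0)
  (Hmin : forall theta lam, -A < theta < A ->
            principal_eig1 m a b K Rr theta 0 lam -> lam0 <= lam)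
  (Hneg : lam0 < 0)
  (eps0 : R) (Heps0 : 0 < eps0)
  (Hmu : forall eps mu, 0 < eps < eps0 ->
           principal_eig2 m a b K Rr A eps mu -> mu < lam0 / 2) :
  (forall eps n, 0 < eps < eps0 -> solE m a b K Rr A eps n ->
     forall x, inOmega m a b x -> 0 <= rho_of A n x <= C_R) /\
  (forall p : Rbar, Rbar_le (Finite 1) p ->
     exists C, 0 < C /\ exists eps1, 0 < eps1 /\
       forall eps n, 0 < eps < eps1 -> eps < eps0 -> solE m a b K Rr A eps n ->
         Rbar_le (W2p_norm m a b p (rho_of A n)) (Finite C)).
Proof.
  assert (HRb : forall x t, inOmegaBar m a b x -> -A <= t <= A -> Rabs (Rr x t) < C_R)
    by (intros x t H1 H2; apply (HRbd x t H1 H2)).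
  assert (HKb : forall x, 0 < K x < C_K) by (intro x; destruct (HKbd x) as [[H1 H2] _]; split; lra).
  assert (Hcore := fun eps n Hs => core A m a b K Rr C_R C_K eps n HA Hm Hab HRC1 HRb HKC1 HKb Hs).
  split.
  { intros eps n Heps Hs x Hx. exact (proj1 (Hcore eps n Hs x (Omega_Bar m a b x Hx))). }
  set (L := Lsum m a b). set (B2 := C_R * C_K * L + 2 * (C_R * C_R)).
  set (B := C_R + B2 * L + B2).
  assert (Hab0 : a 0%nat < b 0%nat) by (apply Hab; lia).
  assert (HCR : 0 < C_R).
  { assert (Hb : inOmegaBar m a b (a 0%nat)) by (exists 0%nat; split; [lia|lra]).
    pose proof (HRb (a 0%nat) 0 Hb ltac:(lra)). pose proof (Rabs_pos (Rr (a 0%nat) 0)). lra. }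
  assert (HCK : 0 < C_K) by (destruct (HKb 0); lra).
  assert (HL : 0 <= L).
  { unfold L, Lsum. apply sumI_nonneg. intros i Hi. pose proof (Hab i Hi). lra. }
  assert (HB2 : 0 <= B2).
  { unfold B2. assert (0 <= C_R * C_K * L) by (apply Rmult_le_pos; [apply Rmult_le_pos|]; lra).
    assert (0 <= C_R * C_R) by (apply Rmult_le_pos; lra). lra. }
  assert (HB2L : 0 <= B2 * L) by (apply Rmult_le_pos; lra).
  assert (HDk : forall eps n, solE m a b K Rr A eps n -> forall k, (k < 3)%nat ->
            (forall z, continuous (Derive_n (rho_of A n) k) z) /\
            (forall x, inOmega m a b x -> Rabs (Derive_n (rho_of A n) k x) <= B)).
  { intros eps n Hs k Hk. pose proof (proj1 Hs) as Hn2.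
    destruct k as [|[|[|k]]]; [| | |lia]; split.
    - intro z. change (continuous (rho_of A n) z). apply rho_cont; auto.
    - intros x Hx. destruct (Hcore eps n Hs x (Omega_Bar m a b x Hx)) as [H0 [H2 H1]].
      change (Rabs (rho_of A n x) <= B). rewrite Rabs_right by lra. unfold B. lra.
    - intro z. change (continuous (Derive (rho_of A n)) z). apply rho_D1_cont; auto.
    - intros x Hx. destruct (Hcore eps n Hs x (Omega_Bar m a b x Hx)) as [H0 [H2 H1]].
      change (Rabs (Derive (rho_of A n) x) <= B). unfold B, B2, L. unfold B2, L in HB2. lra.
    - intro z. change (continuous (Derive (Derive (rho_of A n))) z). apply rho_D2_cont; auto.
    - intros x Hx. destruct (Hcore eps n Hs x (Omega_Bar m a b x Hx)) as [H0 [H2 H1]].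
      change (Rabs (Derive (Derive (rho_of A n)) x) <= B). unfold B, B2, L. unfold B2, L in HB2L. lra. }
  intros p Hp. destruct p as [q| |]; simpl in Hp; [| |contradiction].
  - assert (Hq0 : 0 < q) by lra.
    set (X := powR0 (L * powR0 B q) (/ q)).
    exists (3 * X + 1). split. { pose proof (powR0_nonneg (L * powR0 B q) (/ q)). unfold X; lra. }
    exists eps0. split; auto. intros eps n He He0 Hs.
    assert (Hg : forall k, (k < 3)%nat ->
      powR0 (IntOmega m a b (fun x => powR0 (Rabs (Derive_n (rho_of A n) k x)) q)) (/ q) <= X).
    { intros k Hk. destruct (HDk eps n Hs k Hk) as [Hc Hb]. apply powR0_mono.
      apply Rinv_0_lt_compat; lra. apply IntOmega_le; auto.
      intro z. apply (continuous_comp (fun x => Rabs (Derive_n (rho_of A n) k x)) (fun y => powR0 y q)).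
      apply continuous_Rabs_comp; auto. apply powR0_cont; auto.
      intros x Hx. apply powR0_mono; auto. }
    pose proof (Hg 0%nat ltac:(lia)) as G0. pose proof (Hg 1%nat ltac:(lia)) as G1. pose proof (Hg 2%nat ltac:(lia)) as G2. simpl in G0, G1, G2.
    unfold W2p_norm. simpl Rbar_le. simpl sumI. lra.
  - exists (3 * B + 1). split. { unfold B; lra. }
    exists eps0. split; auto. intros eps n He He0 Hs.
    assert (Hmid : inOmega m a b ((a 0%nat + b 0%nat) / 2)) by (exists 0%nat; split; [lia|lra]).
    destruct (HDk eps n Hs 0%nat ltac:(lia)) as [_ Hb0].
    destruct (HDk eps n Hs 1%nat ltac:(lia)) as [_ Hb1].
    destruct (HDk eps n Hs 2%nat ltac:(lia)) as [_ Hb2].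
    destruct (Lub_bound (fun y => exists x, inOmega m a b x /\ y = Rabs (rho_of A n x)) B) as [l0 [E0 H0]].
    { eexists; exists ((a 0%nat + b 0%nat) / 2); split; eauto. }
    { intros y [x [Hx ->]]. apply (Hb0 x Hx). }
    destruct (Lub_bound (fun y => exists x, inOmega m a b x /\ y = Rabs (Derive (rho_of A n) x)) B) as [l1 [E1 H1]].
    { eexists; exists ((a 0%nat + b 0%nat) / 2); split; eauto. }
    { intros y [x [Hx ->]]. apply (Hb1 x Hx). }
    destruct (Lub_bound (fun y => exists x, inOmega m a b x /\ y = Rabs (Derive_n (rho_of A n) 2 x)) B) as [l2 [E2 H2]].
    { eexists; exists ((a 0%nat + b 0%nat) / 2); split; eauto. }
    { intros y [x [Hx ->]]. apply (Hb2 x Hx). }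
    unfold W2p_norm. rewrite E0, E1, E2. simpl. lra.
Qed.
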